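(* Let $k$ be a complex number and $n$ a positive integer. Then \[ \sum_{\pi \in \mathcal{D}(n)} (-1)^{\#(\pi)-1} s(\pi)^k = \sum_{\pi \in \mathcal{P}(n)} \sum_{j=0}^{\nu_d(\pi)} (-1)^j \binom{\nu_d(\pi)}{j} \bigl(\ell(\pi)-j\bigr)^k, \] where any term with $\ell(\pi)-j=0$ is interpreted as $0$.
   Context: $\mathcal{P}(n)$ is the set of all partitions of $n$ and $\mathcal{D}(n)$ the set of partitions of $n$ into distinct parts. For a partition $\pi$: $s(\pi)$ is its smallest part, $\ell(\pi)$ its largest part, $\#(\pi)$ its number of parts, and $\nu_d(\pi)$ the number of distinct part sizes of $\pi$. For a positive integer $m$ and complex $k$, $m^k=e^{k\log m}$ with the real logarithm. *)

(* Defs.v *)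
From HB Require Import structures.
From mathcomp Require Import all_boot all_order all_algebra.
From mathcomp Require Import all_classical all_reals all_analysis.
From mathcomp Require Import complex.
Set Implicit Arguments. Unset Strict Implicit. Unset Printing Implicit Defensive.
Import Order.TTheory GRing.Theory Num.Theory.
Local Open Scope ring_scope.

(* A partition of n is encoded by its multiplicity function:
   m : {ffun 'I_n -> 'I_n.+1}, where m i is the number of parts equal to i.+1
   (every part of a partition of n lies in 1..n and occurs at most n times). *)
Definition mult (n : nat) := {ffun 'I_n -> 'I_n.+1}.

Definition is_partition (n : nat) (m : mult n) : bool :=
  (\sum_(i < n) i.+1 * m i)%N == n.

Definition is_distinct (n : nat) (m : mult n) : bool :=
  [forall i, (m i <= 1)%N].

Definition nparts (n : nat) (m : mult n) : nat := (\sum_(i < n) m i)%N.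

Definition nu_d (n : nat) (m : mult n) : nat := #|[set i | (0 < m i)%N]|.

(* s(pi): smallest part (default n.+1 only for the empty partition, n = 0) *)
Definition spart (n : nat) (m : mult n) : nat :=
  \big[minn/n.+1]_(i < n | (0 < m i)%N) i.+1.

Definition lpart (n : nat) (m : mult n) : nat :=
  \max_(i < n | (0 < m i)%N) i.+1.

(* m^k = e^{k log m} for a positive integer m and complex k, real logarithm:
   e^{(a+ib) ln m} = e^{a ln m} (cos (b ln m) + i sin (b ln m)).
   The value at m = 0 is set to 0, following the paper's convention that
   terms with base 0 are interpreted as 0. *)
Definition cpow_nat (R : realType) (m : nat) (k : R[i]) : R[i] :=
  if m == 0%N then 0 else
  let L := ln (m%:R : R) in
  Complex (expR (complex.Re k * L) * cos (complex.Im k * L))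
          (expR (complex.Re k * L) * sin (complex.Im k * L)).

(* Main.v *)
Require Import Defs.
From HB Require Import structures.
From mathcomp Require Import all_boot all_order all_algebra.
From mathcomp Require Import all_classical all_reals all_analysis.
From mathcomp Require Import complex.
Import Order.TTheory GRing.Theory Num.Theory.
Local Open Scope ring_scope.

From mathcomp Require Import ring zify.

Module QA.
Set Implicit Arguments. Unset Strict Implicit. Unset Printing Implicit Defensive.
Local Open Scope ring_scope.

Section Alg.
Variable N : nat.
Local Notation P1 := {poly int}.
Local Notation P2 := {poly {poly int}}.

Definition cong1 (p q : P1) := forall k, (k <= N)%N -> p`_k = q`_k.
Definition cong2 (P Q : P2) := forall a, cong1 P`_a Q`_a.

Lemma cong1_refl p : cong1 p p. Proof. by []. Qed.
Lemma cong1_sym p q : cong1 p q -> cong1 q p. Proof. by move=> h k hk; rewrite h. Qed.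
Lemma cong1_trans p q r : cong1 p q -> cong1 q r -> cong1 p r.
Proof. by move=> h1 h2 k hk; rewrite h1 // h2. Qed.
Lemma cong1_add p q p' q' : cong1 p p' -> cong1 q q' -> cong1 (p + q) (p' + q').
Proof. by move=> h1 h2 k hk; rewrite !coefD h1 // h2. Qed.
Lemma cong1_opp p p' : cong1 p p' -> cong1 (- p) (- p').
Proof. by move=> h1 k hk; rewrite !coefN h1. Qed.
Lemma cong1_mul p q p' q' : cong1 p p' -> cong1 q q' -> cong1 (p * q) (p' * q').
Proof.
move=> h1 h2 k hk; rewrite !coefM; apply: eq_bigr => j _.
have hj : (j <= N)%N by apply: leq_trans hk; rewrite -ltnS.
have hj' : (k - j <= N)%N by apply: leq_trans (leq_subr _ _) hk.
by rewrite h1 // h2.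
Qed.
Lemma cong1_sum I (r : seq I) (P : pred I) (F G : I -> P1) :
  (forall i, P i -> cong1 (F i) (G i)) ->
  cong1 (\sum_(i <- r | P i) F i) (\sum_(i <- r | P i) G i).
Proof.
move=> h; apply: (big_ind2 cong1) => // ????; exact: cong1_add.
Qed.
Lemma cong1_prod I (r : seq I) (P : pred I) (F G : I -> P1) :
  (forall i, P i -> cong1 (F i) (G i)) ->
  cong1 (\prod_(i <- r | P i) F i) (\prod_(i <- r | P i) G i).
Proof.
move=> h; apply: (big_ind2 cong1) => // ????; exact: cong1_mul.
Qed.

Lemma cong2_refl p : cong2 p p. Proof. by []. Qed.
Lemma cong2_sym p q : cong2 p q -> cong2 q p. Proof. by move=> h a; apply: cong1_sym. Qed.
Lemma cong2_trans p q r : cong2 p q -> cong2 q r -> cong2 p r.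
Proof. by move=> h1 h2 a; apply: cong1_trans (h1 a) (h2 a). Qed.
Lemma cong2_add p q p' q' : cong2 p p' -> cong2 q q' -> cong2 (p + q) (p' + q').
Proof. by move=> h1 h2 a; rewrite !coefD; apply: cong1_add. Qed.
Lemma cong2_opp p p' : cong2 p p' -> cong2 (- p) (- p').
Proof. by move=> h1 a; rewrite !coefN; apply: cong1_opp. Qed.
Lemma cong2_mul p q p' q' : cong2 p p' -> cong2 q q' -> cong2 (p * q) (p' * q').
Proof.
move=> h1 h2 a; rewrite !coefM; apply: cong1_sum => j _; exact: cong1_mul.
Qed.
Lemma cong2_sum I (r : seq I) (P : pred I) (F G : I -> P2) :
  (forall i, P i -> cong2 (F i) (G i)) ->
  cong2 (\sum_(i <- r | P i) F i) (\sum_(i <- r | P i) G i).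
Proof.
move=> h; apply: (big_ind2 cong2) => // ????; exact: cong2_add.
Qed.
Lemma cong2_prod I (r : seq I) (P : pred I) (F G : I -> P2) :
  (forall i, P i -> cong2 (F i) (G i)) ->
  cong2 (\prod_(i <- r | P i) F i) (\prod_(i <- r | P i) G i).
Proof.
move=> h; apply: (big_ind2 cong2) => // ????; exact: cong2_mul.
Qed.
Lemma cong2_eq P Q : P = Q -> cong2 P Q. Proof. by move=> ->. Qed.
Lemma cong1_eq P Q : P = Q -> cong1 P Q. Proof. by move=> ->. Qed.
Lemma cong2_C c c' : cong1 c c' -> cong2 c%:P c'%:P.
Proof. by move=> h a; rewrite !coefC; case: eqP. Qed.

Definition G i : P1 := \sum_(t < N.+1) 'X^(i * t).

Lemma G_inv i : (0 < i)%N -> cong1 ((1 - 'X^i) * G i) 1.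
Proof.
move=> i0 k hk.
have -> : (1 - 'X^i) * G i = 1 ^+ N.+1 - ('X^i) ^+ N.+1 :> P1.
  rewrite subrXX /G; congr (_ * _); apply: eq_bigr => t _.
  by rewrite expr1n mul1r exprM.
rewrite expr1n -exprM coefB coefXn.
have : (k < i * N.+1)%N.
  by apply: (leq_trans (n:=N.+1)) => //; rewrite leq_pmull.
by case: eqP => [->|]; rewrite ?ltnn // subr0.
Qed.


Local Notation y := ('X : P2).
Local Notation Xc := (('X : P1)%:P : P2).

Definition sub (P : P2) : P2 := \poly_(a < size P) (P`_a * 'X^a).

Lemma coef_sub P a : (sub P)`_a = P`_a * 'X^a.
Proof.
rewrite coef_poly; case: ltnP => // h.
by rewrite nth_default // mul0r.
Qed.

Lemma sub_add P Q : sub (P + Q) = sub P + sub Q.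
Proof. by apply/polyP => a; rewrite coefD !coef_sub coefD mulrDl. Qed.

Lemma sub_mul P Q : sub (P * Q) = sub P * sub Q.
Proof.
apply/polyP => k; rewrite coef_sub !coefM mulr_suml; apply: eq_bigr => j _.
rewrite !coef_sub mulrACA -exprD subnKC //; by rewrite -ltnS.
Qed.

Lemma sub_C c : sub c%:P = c%:P.
Proof. by apply/polyP => a; rewrite coef_sub !coefC; case: eqP => [->|]; rewrite ?mulr1 ?mul0r. Qed.

Lemma sub_X : sub y = y * Xc.
Proof.
apply/polyP => a; rewrite coef_sub coefMC coefX.
by case: eqP => [->|]; rewrite ?expr1 ?mul1r ?mul0r.
Qed.

Lemma sub_1 : sub 1 = 1. Proof. exact: sub_C. Qed.
Lemma sub_neg P : sub (- P) = - sub P.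
Proof. by apply/polyP => a; rewrite coefN !coef_sub coefN mulNr. Qed.

Lemma sub_prod I (r : seq I) (Pr : pred I) (F : I -> P2) :
  sub (\prod_(i <- r | Pr i) F i) = \prod_(i <- r | Pr i) sub (F i).
Proof. by apply: (big_morph sub sub_mul sub_1). Qed.

Lemma sub_sum I (r : seq I) (Pr : pred I) (F : I -> P2) :
  sub (\sum_(i <- r | Pr i) F i) = \sum_(i <- r | Pr i) sub (F i).
Proof. by apply: (big_morph sub sub_add); rewrite -polyC0 sub_C. Qed.

Lemma sub_cong P Q : cong2 P Q -> cong2 (sub P) (sub Q).
Proof. by move=> h a; rewrite !coef_sub; apply: cong1_mul. Qed.

Definition p L : P2 := \prod_(i < L) (y - ('X^i)%:P).
Definition Q L : P1 := \prod_(i < L) G i.+1.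
Definition T L : P2 := (('X^L) * Q L)%:P * p L.
Definition S : P2 := \sum_(L < N.+1) T L.

Lemma sub_p L : sub (p L.+1) = (y * Xc - 1) * ('X^L)%:P * p L.
Proof.
rewrite /p sub_prod big_ord_recl /= sub_add sub_neg sub_X sub_C expr0 polyC1.
rewrite -mulrA; congr (_ * _).
have -> : \prod_(i < L) sub (y - ('X^(bump 0 i))%:P) = \prod_(i < L) (Xc * (y - ('X^i)%:P)).
  apply: eq_bigr => i _; rewrite sub_add sub_neg sub_X sub_C /bump /= add1n exprS polyCM.
  by rewrite mulrBr mulrC.
by rewrite big_split /= prodr_const card_ord -polyC_exp.
Qed.

Lemma cong2_CX c (P : P2) : cong2 (('X^(N.+1) * c)%:P * P) 0.
Proof.
move=> a k hk; rewrite coefCM !coef0 -mulrA coefXnM.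
by rewrite ltnS hk.
Qed.

Lemma key : cong2 (S * (1 - y * Xc)) (sub S).
Proof.
rewrite /S sub_sum mulrBr mulr1 big_distrl /=.
rewrite big_ord_recl [X in _ - X]big_ord_recr /= [X in cong2 _ X]big_ord_recl /=.
have T0 : T 0 = 1 by rewrite /T /Q /p !big_ord0 expr0 mulr1 mulr1 polyC1.
rewrite T0 sub_1.
have -> : forall (a b c d : P2), a + b - (c + d) = a + (b - c) - d.
  by move=> a b c d; ring.
apply: (@cong2_trans _ (1 + \sum_(i < N) sub (T (bump 0 i)) - 0)).
  apply: cong2_add; last first.
    apply: cong2_opp.
    have -> : T N * (y * Xc) = (('X^(N.+1) * Q N)%:P) * (p N * y).
      by rewrite /T !polyCM !polyC_exp exprS; ring.
    exact: cong2_CX.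
  apply: cong2_add => //; rewrite -sumrB; apply: cong2_sum => L _.
  rewrite /bump /= add1n.
  set c := (('X^L) * Q L) : P1.
  have hc : cong1 c (c * ((1 - 'X^(L.+1)) * G L.+1)).
    apply: cong1_sym; rewrite -[X in cong1 _ X]mulr1; apply: cong1_mul => //.
    exact: G_inv.
  apply: (@cong2_trans _
    (T L.+1 - ((c * ((1 - 'X^(L.+1)) * G L.+1))%:P * p L) * (y * Xc))).
    apply: cong2_add; first exact: cong2_refl.
    apply: cong2_opp; apply: cong2_mul; last exact: cong2_refl.
    rewrite [T L]/T; apply: cong2_mul; last exact: cong2_refl.
    exact: cong2_C.
  rewrite /T sub_mul sub_C sub_p /c /Q /p big_ord_recr /= [\prod_(i < L.+1) _]big_ord_recr /=.
  rewrite !polyCM !polyCB !polyC1 !polyC_exp !exprS.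
  set q := (\prod_(i < L) G i.+1)%:P.
  set g := (G L.+1)%:P.
  set pp := \prod_(i < L) (y - ('X^i)%:P).
  apply: cong2_eq; ring.
by rewrite subr0.
Qed.


Lemma rec_o a : cong1 ((1 - 'X^(a.+1)) * S`_(a.+1)) ('X * S`_a).
Proof.
have h := key a.+1.
rewrite coef_sub mulrBr mulr1 coefB mulrA coefMC coefMX /= in h.
apply: (@cong1_trans _ ((S`_(a.+1) - S`_a * 'X) - S`_(a.+1) * 'X^(a.+1) + 'X * S`_a)).
  by apply: cong1_eq; ring.
apply: (@cong1_trans _ (S`_(a.+1) * 'X^(a.+1) - S`_(a.+1) * 'X^(a.+1) + 'X * S`_a)).
  apply: cong1_add; last exact: cong1_refl.
  apply: cong1_add; [exact: h | exact: cong1_refl].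
by apply: cong1_eq; ring.
Qed.

Definition u a : P1 := 'X^a * \prod_(i < a) G i.+1.

Lemma u0 : u 0 = 1. Proof. by rewrite /u big_ord0 expr0 mulr1. Qed.

Lemma rec_gen (f : nat -> P1) M :
  (forall a, (a < M)%N -> cong1 ((1 - 'X^(a.+1)) * f a.+1) ('X * f a)) ->
  forall a, (a <= M)%N -> cong1 (f a) (f 0%N * u a).
Proof.
move=> h; elim => [|a IH] ha; first by rewrite u0 mulr1; exact: cong1_refl.
have hG := G_inv (ltn0Sn a).
apply: (@cong1_trans _ ((G a.+1 * (1 - 'X^(a.+1))) * f a.+1)).
  rewrite -[X in cong1 X _]mul1r; apply: cong1_mul; last exact: cong1_refl.
  by rewrite mulrC; apply: cong1_sym.
rewrite -mulrA.
apply: (@cong1_trans _ (G a.+1 * ('X * f a))).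
  apply: cong1_mul; [exact: cong1_refl | exact: h].
apply: (@cong1_trans _ (G a.+1 * ('X * (f 0%N * u a)))).
  apply: cong1_mul; first exact: cong1_refl.
  apply: cong1_mul; first exact: cong1_refl.
  by apply: IH; apply: ltnW.
apply: cong1_eq; rewrite /u big_ord_recr /= exprS; ring.
Qed.

Lemma o_rec a : cong1 (S`_a) (S`_0 * u a).
Proof. apply: (@rec_gen (fun a => S`_a) a) => // b _; exact: rec_o. Qed.

Definition l a : P1 := 'X^a * \prod_(a <= i < N) (1 - 'X^(i.+1)).

Lemma l_rec a : (a < N)%N -> (1 - 'X^(a.+1)) * l a.+1 = 'X * l a.
Proof. move=> h; rewrite /l [in RHS]big_ltn //. set t := \prod_(_ <= _ < _) _. rewrite exprS. ring. Qed.

Lemma l_u a : (a <= N)%N -> cong1 (l a) (l 0 * u a).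
Proof. apply: rec_gen => b hb; rewrite l_rec //; exact: cong1_refl. Qed.

Lemma sum_l : \sum_(a < N.+1) l a = 1.
Proof.
suff h : forall K, (K <= N)%N -> \sum_(a < K.+1) l a = \prod_(K <= i < N) (1 - 'X^(i.+1)).
  by rewrite h // big_geq.
elim => [|K IH] hK; first by rewrite big_ord1 /l expr0 mul1r.
rewrite big_ord_recr /= IH ?(ltnW hK) // [\prod_(K <= i < N) _]big_ltn /l.
  set t := \prod_(_ <= _ < _) _; ring.
exact: hK.
Qed.

Lemma S1 : S.[1] = 1.
Proof.
rewrite /S horner_sum big_ord_recl /= big1 ?addr0.
  by rewrite /T /Q /p !big_ord0 expr0 !mulr1 hornerC.
move=> L _; rewrite /T hornerCM /p horner_prod big_ord_recl /=.
by rewrite expr0 hornerD hornerN hornerX hornerC subrr mul0r mulr0.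
Qed.

Lemma u_big a : (N < a)%N -> cong1 (u a) 0.
Proof.
move=> h k hk; rewrite coef0 /u coefXnM.
by rewrite (leq_trans (n := N.+1)) // ltnS.
Qed.

Lemma widen_cong (F : nat -> P1) M : (N.+1 <= M)%N ->
  (forall a, (N < a)%N -> cong1 (F a) 0) ->
  cong1 (\sum_(a < M) F a) (\sum_(a < N.+1) F a).
Proof.
move=> hM h; rewrite (big_ord_widen _ F hM) [X in cong1 _ X]big_mkcond /=.
apply: cong1_sum => a _; case: ifP => ha; first exact: cong1_refl.
by apply: h; rewrite ltnNge -ltnS ha.
Qed.

Lemma sum_o : cong1 (\sum_(a < N.+1) S`_a) 1.
Proof.
set M := maxn (size S) N.+1.
have e : S.[1] = \sum_(a < M) S`_a.
  rewrite (@horner_coef_wide _ M _ _ (leq_maxl _ _)); apply: eq_bigr => a _.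
  by rewrite expr1n mulr1.
apply: (@cong1_trans _ (S.[1])); last by rewrite S1; exact: cong1_refl.
rewrite e; apply: cong1_sym.
have h := @widen_cong (fun a => S`_a) M (leq_maxr _ _).
simpl in h; apply: h => a ha.
apply: (@cong1_trans _ (S`_0 * u a)); first exact: o_rec.
apply: (@cong1_trans _ (S`_0 * 0)); last by apply: cong1_eq; rewrite mulr0.
apply: cong1_mul; first exact: cong1_refl.
exact: u_big.
Qed.

Lemma cancelU (q U : P1) : U`_0 = 1 -> cong1 (q * U) 0 -> cong1 q 0.
Proof.
move=> hU h.
suff H : forall k, (k <= N)%N -> forall j, (j <= k)%N -> q`_j = 0.
  move=> k hk; rewrite (H k hk k (leqnn k)); symmetry; exact: coef0.
elim => [|k IH] hk j hj.
  have hj0 : j = 0%N by apply/eqP; rewrite -leqn0.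
  subst j; have := h 0%N (leq0n _).
  rewrite coefM big_ord1 subnn hU mulr1 => ->; exact: coef0.
case: (ltnP j k.+1) => hjk; first by apply: IH => //; exact: ltnW.
have hj' : j = k.+1 by apply/eqP; rewrite eqn_leq hj hjk.
subst j; have := h k.+1 hk; rewrite coefM big_ord_recr /= subnn hU mulr1.
rewrite big1; first by rewrite add0r => ->; exact: coef0.
move=> i _; rewrite (IH (ltnW hk) i); first exact: mul0r.
by rewrite -ltnS.
Qed.

Lemma o_eq_l a : (a <= N)%N -> cong1 (S`_a) (l a).
Proof.
move=> ha.
set U := \sum_(b < N.+1) u b.
have hU0 : U`_0 = 1.
  rewrite /U coef_sum big_ord_recl /= u0 coefC /= big1 ?addr0 //.
  by move=> i _; rewrite /u coefXnM.
have h : cong1 ((S`_0 - l 0) * U) 0.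
  rewrite mulrBl /U !mulr_sumr.
  apply: (@cong1_trans _ (\sum_(b < N.+1) S`_b - \sum_(b < N.+1) l b)).
    apply: cong1_add; first by apply: cong1_sum => b _; apply: cong1_sym; exact: o_rec.
    apply: cong1_opp; apply: cong1_sum => b _; apply: cong1_sym; apply: l_u.
    by rewrite -ltnS.
  rewrite sum_l; apply: (@cong1_trans _ (1 - 1)); last by apply: cong1_eq; rewrite subrr.
  apply: cong1_add; [exact: sum_o | exact: cong1_refl].
have h0 : cong1 (S`_0) (l 0).
  move=> k hk; have := cancelU hU0 h hk; rewrite coefB coef0 => /eqP.
  by rewrite subr_eq0 => /eqP.
apply: cong1_trans (o_rec a) _; apply: cong1_sym; apply: cong1_trans (l_u ha) _.
apply: cong1_mul; [exact: cong1_sym | exact: cong1_refl].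
Qed.

End Alg.

Section Comb.
Variable n : nat.
Implicit Types m : mult n.

Lemma bigmin_le (P : pred 'I_n) (F : 'I_n -> nat) x i0 :
  P i0 -> (\big[minn/x]_(i | P i) F i <= F i0)%N.
Proof.
move=> h.
have : i0 \in index_enum 'I_n by rewrite mem_index_enum.
elim: (index_enum 'I_n) => // a r IH; rewrite inE big_cons => /orP [/eqP <-|hr].
  by rewrite h geq_minl.
by case: ifP => _; [apply: leq_trans (geq_minr _ _) _|]; exact: IH.
Qed.

Lemma bigmin_ge (P : pred 'I_n) (F : 'I_n -> nat) x v :
  (forall i, P i -> v <= F i)%N -> (v <= x)%N -> (v <= \big[minn/x]_(i | P i) F i)%N.
Proof.
move=> h hx; elim/big_ind: _ => [//|a b ha hb|i Pi]; first by rewrite leq_min ha hb.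
exact: h.
Qed.

Lemma bigmin_attained (P : pred 'I_n) (F : 'I_n -> nat) x :
  \big[minn/x]_(i | P i) F i = x \/ exists2 i, P i & \big[minn/x]_(i | P i) F i = F i.
Proof.
elim/big_ind: _; [by left | | by move=> i Pi; right; exists i].
move=> a b [->|[i Pi ->]] [->|[j Pj ->]]; rewrite /minn; case: ltnP => _; by [left | right; exists i | right; exists j].
Qed.

Lemma bigmax_attained (P : pred 'I_n) (F : 'I_n -> nat) :
  \max_(i | P i) F i = 0%N \/ exists2 i, P i & \max_(i | P i) F i = F i.
Proof.
elim/big_ind: _; [by left | | by move=> i Pi; right; exists i].
move=> a b [->|[i Pi ->]] [->|[j Pj ->]]; rewrite /maxn; case: ltnP => _; by [left | right; exists i | right; exists j].
Qed.

Lemma lpart_le m : (lpart m <= n)%N.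
Proof. by apply/bigmax_leqP => i _; exact: ltn_ord. Qed.

Lemma supp_lt_lpart m i : (0 < m i)%N -> (i < lpart m)%N.
Proof. by move=> h; exact: (leq_bigmax_cond i h). Qed.

Lemma partition_supp m : is_partition m -> (0 < n)%N -> exists i, (0 < m i)%N.
Proof.
move=> hp hn; case: (pickP [pred i | 0 < m i]%N) => [i hi|h0]; first by exists i.
move: hp; rewrite /is_partition big1.
  by move: hn; rewrite lt0n eq_sym => /negbTE ->.
move=> i _; by move: (h0 i) => /= /negbT; rewrite lt0n negbK => /eqP ->; rewrite muln0.
Qed.

Lemma spart_le m : is_partition m -> (0 < n)%N -> (spart m <= n)%N.
Proof.
move=> hp hn; have [i hi] := partition_supp hp hn.
by apply: leq_trans (bigmin_le _ _ hi) _; exact: ltn_ord.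
Qed.


Definition hA (a : nat) (i : 'I_n) (t : nat) : {poly int} :=
  (if (t <= 1)%N then (- 'X^(i.+1)) ^+ t else 0) *
  (if (i.+1 < a)%N then (t == 0%N)%:R else if i.+1 == a then (t == 1%N)%:R else 1).

Definition goodA a m := [forall i, (m i <= 1)%N] &&
  [forall i : 'I_n, ((i.+1 < a)%N ==> (m i == 0%N :> nat)) && ((i.+1 == a) ==> (m i == 1%N :> nat))].

Lemma prod_hA a m : \prod_i hA a i (m i) =
  (goodA a m)%:R * ((-1) ^+ nparts m * 'X^(\sum_(i<n) i.+1 * m i)).
Proof.
case: (boolP (goodA a m)) => g.
  move/andP: g => [/forallP g1 /forallP g2]; rewrite mul1r.
  transitivity (\prod_i ((-1) ^+ (m i) * 'X^(i.+1 * m i)) : {poly int}).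
    apply: eq_bigr => i _; rewrite /hA g1 [(- 'X^(i.+1)) ^+ _]exprNn -exprM.
    move/andP: (g2 i) => [h1 h2].
    case: ltnP => hi.
      by move: h1; rewrite hi /= => /eqP ->; rewrite eqxx !mulr1.
    case: eqP => hia; last by rewrite mulr1.
    by move: h2; rewrite hia eqxx /= => /eqP ->; rewrite eqxx mulr1.
  by rewrite big_split /= -!expr_sum.
rewrite mul0r; move: g; rewrite negb_and => /orP [|].
  rewrite negb_forall => /existsP [i hi].
  rewrite (bigD1 i) //= /hA (negbTE hi) mul0r mul0r //.
rewrite negb_forall => /existsP; case=> i; rewrite negb_and => /orP [|] hi.
  move: hi; rewrite negb_imply => /andP [h1 h2].
  by rewrite (bigD1 i) //= /hA h1 (negbTE h2) mulr0 mul0r.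
move: hi; rewrite negb_imply => /andP [h1 h2].
move/eqP: h1 => h1; by rewrite (bigD1 i) //= /hA h1 ltnn eqxx (negbTE h2) mulr0 mul0r.
Qed.

Lemma goodA_iff a m : (0 < a)%N -> (a <= n)%N ->
  goodA a m = is_distinct m && (spart m == a).
Proof.
case: a => // a' _ ha.
set i0 : 'I_n := Ordinal ha.
apply/idP/idP.
  move/andP => [g1 /forallP g2]; rewrite /is_distinct g1 /=.
  have hm0 : m i0 = 1%N :> nat.
    by move/andP: (g2 i0) => [_ h]; move: h; rewrite eqxx /= => /eqP.
  rewrite eqn_leq; apply/andP; split.
    have := @bigmin_le (fun i => 0 < m i)%N (fun i : 'I_n => i.+1) n.+1 i0; rewrite /= hm0 => /(_ isT) h; exact: h.
  apply: bigmin_ge => [i hi|]; last exact: (leq_trans ha (leqnSn n)).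
  rewrite leqNgt; apply/negP => hlt.
  by move/andP: (g2 i) => [h _]; move: h; rewrite hlt /= => /eqP h; rewrite h in hi.
move=> /andP [hd /eqP hs]; apply/andP; split; first exact: hd.
apply/forallP => i.
have hsupp : forall j, (0 < m j)%N -> (a'.+1 <= j.+1)%N.
  by move=> j hj; rewrite -hs; exact: bigmin_le.
apply/andP; split; apply/implyP => hi.
  by rewrite -leqn0 leqNgt; apply/negP => /hsupp; rewrite leqNgt hi.
have hmi : (m i <= 1)%N by move/forallP: hd.
have : (0 < m i)%N.
  case: (bigmin_attained (fun i : 'I_n => 0 < m i)%N (fun i : 'I_n => i.+1) n.+1) => [h|[j hj h]].
    by have := ha; rewrite -hs /spart h ltnn.
  have e : j = i by apply: val_inj => /=; apply/eqP; rewrite -eqSS -h; move: hs; rewrite /spart => ->; rewrite eq_sym.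
  by rewrite -e.
by move=> h; rewrite eqn_leq hmi h.
Qed.


Definition cA (a i : nat) : {poly int} :=
  if (i.+1 < a)%N then 1 else if i.+1 == a then - 'X^a else 1 - 'X^(i.+1).

Lemma sum_hA a (i : 'I_n) : (0 < n)%N -> \sum_(t < n.+1) hA a i t = cA a i.
Proof.
move=> n0.
rewrite (bigID (fun t : 'I_n.+1 => (t < 2)%N)) /= [X in _ + X]big1 => [|t ht]; last first.
  by rewrite /hA (_ : (t <= 1)%N = false) ?mul0r //; apply/negbTE.
rewrite addr0 -(big_ord_widen n.+1 (hA a i) (n1 := 2)) //.
rewrite big_ord_recl big_ord_recl big_ord0.
rewrite /hA /cA /= !expr0 !expr1 !mul1r addr0.
case: ltnP => _; first by rewrite mulr0 addr0.
case: eqP => [->|]; by rewrite ?mulr0 ?mulr1 ?add0r // addrC.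
Qed.

Lemma prod_cA a : (0 < a)%N -> (a <= n)%N ->
  \prod_(i < n) cA a i = - l n a.
Proof.
case: a => // a' _ ha.
rewrite -(big_mkord xpredT (cA a'.+1)) (@big_cat_nat _ _ _ a') //=; last exact: ltnW.
rewrite big_nat_cond big1 ?mul1r => [|i /andP [/andP [_ hi] _]]; last by rewrite /cA ltnS hi.
rewrite big_ltn // /cA ltnn eqxx /l.
rewrite [X in _ * X = _](eq_big_nat _ _ (F2 := fun i => 1 - 'X^(i.+1))) => [|i /andP [hi _]].
  by rewrite mulNr.
by rewrite ltnNge ltnW //= gtn_eqF.
Qed.

Lemma lhs_gf a : (0 < a)%N -> (a <= n)%N ->
  \sum_(m : mult n | is_distinct m && (spart m == a))
     ((-1) ^+ (nparts m).-1 * 'X^(\sum_(i<n) i.+1 * m i) : {poly int}) = l n a.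
Proof.
move=> a0 an.
rewrite (eq_bigl (goodA a)) => [|m]; last by rewrite goodA_iff.
transitivity (- \sum_(m : mult n) \prod_i hA a i (m i)).
  rewrite big_mkcond -sumrN; apply: eq_bigr => m _; rewrite prod_hA.
  case: ifP => g; last by rewrite mul0r oppr0.
  rewrite mul1r.
  have : (0 < nparts m)%N.
    case: a a0 an g => // a' _ ha /andP [_ /forallP g2].
    have := g2 (Ordinal ha); rewrite /= eqxx ltnn /= => /eqP h.
    by rewrite /nparts (bigD1 (Ordinal ha)) //= h.
  case: (nparts m) => // k _ /=.
  by rewrite exprS mulN1r mulNr opprK.
rewrite (_ : \sum_(m : mult n) _ = \prod_(i < n) \sum_(t < n.+1) hA a i t); last first.
  by symmetry; exact: (bigA_distr_bigA (fun (i : 'I_n) (t : 'I_n.+1) => hA a i t)).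
have n0 : (0 < n)%N by apply: leq_trans an.
rewrite (eq_bigr (fun i : 'I_n => cA a i)) => [|i _]; last exact: sum_hA.
by rewrite prod_cA // opprK.
Qed.

End Comb.

Section Comb2.
Variable n : nat.
Implicit Types m : mult n.
Local Notation P2 := {poly {poly int}}.
Local Notation y := ('X : P2).

Definition wt m : P2 := \sum_(j < (nu_d m).+1)
  (((-1) ^+ j * ('C(nu_d m, j))%:R : int)%:P%:P * 'X^(lpart m - j)%N).
Definition wt' m : P2 := \prod_(i < n)
  (if (i < lpart m)%N then (if (0 < m i)%N then y - 1 else y) else 1).

Lemma card_lt (L : nat) : (L <= n)%N -> #|[pred i : 'I_n | (i < L)%N]| = L.
Proof.
move=> hL; rewrite -sum1_card.
rewrite (eq_bigl (fun i : 'I_n => (i < L)%N)) // -(big_ord_widen n (fun _ => 1%N) hL).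
by rewrite sum1_card card_ord.
Qed.

Lemma nu_eq m : #|[pred i : 'I_n | (i < lpart m)%N && (0 < m i)%N]| = nu_d m.
Proof.
rewrite /nu_d; apply: eq_card => i; rewrite inE /=.
case h: (0 < m i)%N; rewrite ?inE ?h; [by rewrite andbT (supp_lt_lpart h) | by rewrite andbF].
Qed.

Lemma nu_le m : (nu_d m <= lpart m)%N.
Proof.
rewrite -nu_eq -[X in (_ <= X)%N](card_lt (lpart_le m)).
by apply: subset_leq_card; apply/fintype.subsetP => i; rewrite !inE => /andP [].
Qed.

Lemma wt_eq m : wt m = wt' m.
Proof.
rewrite /wt' -big_mkcond /=.
rewrite (bigID (fun i : 'I_n => (0 < m i)%N)) /=.
rewrite (eq_bigr (fun _ => y - 1)) => [|i /andP [_ ->]] //.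
rewrite [X in _ * X](eq_bigr (fun _ => y)) => [|i /andP [_ /negbTE ->]] //.
have e1 := nu_eq m.
have e2 : #|[pred i : 'I_n | (i < lpart m)%N && ~~ (0 < m i)%N]| = (lpart m - nu_d m)%N.
  have := cardID [pred i : 'I_n | (0 < m i)%N] [pred i : 'I_n | (i < lpart m)%N].
  rewrite card_lt ?lpart_le // => h.
  have hI : #|[predI [pred i : 'I_n | (i < lpart m)%N] & [pred i : 'I_n | (0 < m i)%N]]| = nu_d m.
    by rewrite -e1; apply: eq_card => i; rewrite !inE.
  have hD : #|[predD [pred i : 'I_n | (i < lpart m)%N] & [pred i : 'I_n | (0 < m i)%N]]| =
            #|[pred i : 'I_n | (i < lpart m)%N && ~~ (0 < m i)%N]|.
    by apply: eq_card => i; rewrite !inE andbC.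
  rewrite hI hD in h; lia.
rewrite !prodr_const.
rewrite (_ : #|_| = nu_d m); last by rewrite -e1; apply: eq_card.
rewrite (_ : #|_| = (lpart m - nu_d m)%N); last by rewrite -e2; apply: eq_card.
rewrite /wt exprDn mulr_suml.
apply: eq_bigr => j _.
have hj : (j <= nu_d m)%N by rewrite -ltnS.
have hn := nu_le m.
have -> : (lpart m - j = (nu_d m - j) + (lpart m - nu_d m))%N by lia.
rewrite exprD !rmorphM !rmorphXn !rmorphN !rmorph1 !rmorph_nat -mulr_natr.
ring.
Qed.


Definition hB (L : nat) (i : 'I_n) (t : nat) : P2 :=
  ('X^(i.+1 * t))%:P *
  (if (i.+1 < L)%N then (if (0 < t)%N then y - 1 else y)
   else if i.+1 == L then (if (0 < t)%N then y - 1 else 0) else (t == 0%N)%:R).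

Lemma lpart_attained m : lpart m = 0%N \/ exists2 j : 'I_n, (0 < m j)%N & lpart m = j.+1.
Proof. exact: bigmax_attained. Qed.

Lemma prod_hB L m : (L <= n)%N ->
  \prod_i hB L i (m i) =
  (lpart m == L)%:R * (('X^(\sum_(i<n) i.+1 * m i))%:P * wt' m).
Proof.
move=> hLn.
have e : ('X^(\sum_(i<n) i.+1 * m i))%:P * wt' m =
   \prod_(i < n) (('X^(i.+1 * m i))%:P *
     (if (i < lpart m)%N then (if (0 < m i)%N then y - 1 else y) else 1)).
  by rewrite [RHS]big_split expr_sum rmorph_prod.
rewrite e; case: eqP => [hL|hL].
  rewrite mul1r; apply: eq_bigr => i _; rewrite /hB; congr (_ * _).
  case: ltnP => h1; first by rewrite hL (ltnW h1).
  case: (i.+1 =P L) => h2.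
    have hmi : (0 < m i)%N.
      case: (lpart_attained m) => [h0|[j hj hjl]]; first by move: h2; rewrite -hL h0.
      have -> : i = j by apply: val_inj; apply/eqP; rewrite -eqSS h2 -hjl hL.
      exact: hj.
    by rewrite hmi hL -h2 ltnSn.
  have hlt : (L < i.+1)%N by rewrite ltn_neqAle h1 andbT; apply/eqP => h; apply: h2.
  have hm0 : m i = 0%N :> nat.
    apply/eqP; rewrite -leqn0 leqNgt; apply/negP => hp.
    by have := supp_lt_lpart hp; rewrite hL ltnNge -ltnS hlt.
  by rewrite hm0 eqxx hL ltnNge -ltnS hlt.
rewrite mul0r.
have [i hi] : exists i, hB L i (m i) = 0.
  case: (ltngtP L (lpart m)) => [hlt|hgt|]; last by move=> h; exfalso; apply: hL.
    case: (lpart_attained m) => [h0|[j hj hjl]]; first by move: hlt; rewrite h0.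
    exists j; rewrite /hB hjl in hlt *.
    rewrite ltnNge (ltnW hlt) /= gtn_eqF //.
    by rewrite (_ : (m j == 0%N :> nat) = false) ?mulr0 //; apply/negbTE; rewrite -lt0n.
  case: L hLn hL hgt => // L' hLn hL hgt.
  exists (Ordinal hLn); rewrite /hB /= ltnn eqxx.
  have -> : (0 < m (Ordinal hLn))%N = false.
    apply/negbTE; apply/negP => hp; have := supp_lt_lpart hp.
    by rewrite /= ltnNge -ltnS hgt.
  by rewrite mulr0.
by rewrite (bigD1 i) //= hi mul0r.
Qed.


Definition O : P2 := \sum_(m : mult n) ('X^(\sum_(i<n) i.+1 * m i))%:P * wt m.
Definition cB (L i : nat) : P2 :=
  if (i.+1 < L)%N then y + (y - 1) * (G n i.+1 - 1)%:P
  else if i.+1 == L then (y - 1) * (G n i.+1 - 1)%:P else 1.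

Lemma G1 k : G n k - 1 = \sum_(t < n) 'X^(k * t.+1).
Proof. by rewrite /G big_ord_recl muln0 expr0 [1 + _]addrC addrK. Qed.

Lemma sum_hB L (i : 'I_n) : \sum_(t < n.+1) hB L i t = cB L i.
Proof.
rewrite big_ord_recl.
rewrite (eq_bigr (fun t : 'I_n => ('X^(i.+1 * t.+1))%:P *
   (if (i.+1 < L)%N then y - 1 else if i.+1 == L then y - 1 else 0))) => [|t _]; last first.
  by rewrite /hB /=.
rewrite -big_distrl /= -rmorph_sum -G1 /hB /cB /= muln0 expr0 polyC1 mul1r.
case: ltnP => _; first by rewrite mulrC.
case: eqP => _; first by rewrite add0r mulrC.
by rewrite mulr0 addr0.
Qed.

Lemma sum_ind K x (F : P2) : (x < K)%N -> \sum_(L < K) (x == L)%:R * F = F.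
Proof.
move=> hx; rewrite -big_distrl /= (bigD1 (Ordinal hx)) //= eqxx big1 ?addr0 ?mul1r //.
move=> j hj; case: eqP => // h; exfalso; move/eqP: hj; apply; apply: val_inj; by rewrite /= h.
Qed.

Lemma O_eq : O = \sum_(L < n.+1) \prod_(i < n) cB L i.
Proof.
rewrite /O.
transitivity (\sum_(m : mult n) \sum_(L < n.+1)
   (lpart m == L)%:R * (('X^(\sum_(i<n) i.+1 * m i))%:P * wt m)).
  apply: eq_bigr => m _; rewrite sum_ind //; rewrite ltnS; exact: lpart_le.
rewrite exchange_big /=; apply: eq_bigr => L _.
rewrite (eq_bigr (fun m : mult n => \prod_i hB L i (m i))) => [|m _]; last first.
  by rewrite prod_hB ?wt_eq // -ltnS.
symmetry; rewrite (eq_bigr (fun i : 'I_n => \sum_(t < n.+1) hB L i t)) => [|i _]; last by rewrite sum_hB.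
exact: (bigA_distr_bigA (fun (i : 'I_n) (t : 'I_n.+1) => hB L i t)).
Qed.


Lemma Gc k : (0 < k)%N -> cong1 n (1 - (1 - 'X^k) * G n k) 0.
Proof.
move=> hk; apply: (@cong1_trans _ _ (1 - 1)); last by apply: cong1_eq; rewrite subrr.
apply: cong1_add; first exact: cong1_refl.
by apply: cong1_opp; exact: G_inv.
Qed.

Lemma cB_lt L (i : nat) : (i.+1 < L)%N ->
  cong2 n (cB L i) ((G n i.+1)%:P * (y - ('X^(i.+1))%:P)).
Proof.
move=> h; rewrite /cB h.
apply: (@cong2_trans _ _ ((G n i.+1)%:P * (y - ('X^(i.+1))%:P) + (1 - (1 - 'X^(i.+1)) * G n i.+1)%:P)).
  apply: cong2_eq; rewrite !rmorphB !rmorphM !rmorphB !rmorph1 /=.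
  set g := (G n i.+1)%:P; set x := ('X^(i.+1))%:P; ring.
rewrite -[X in cong2 _ _ X]addr0; apply: cong2_add; first exact: cong2_refl.
rewrite -polyC0; apply: cong2_C; exact: Gc.
Qed.

Lemma cB_eq L : cong2 n (cB L.+1 L) (('X^(L.+1) * G n L.+1)%:P * (y - 1)).
Proof.
rewrite /cB ltnn eqxx.
apply: (@cong2_trans _ _ (('X^(L.+1) * G n L.+1)%:P * (y - 1) - (y - 1) * (1 - (1 - 'X^(L.+1)) * G n L.+1)%:P)).
  apply: cong2_eq; rewrite !rmorphB !rmorphM !rmorphB !rmorph1 /=.
  set g := (G n L.+1)%:P; set x := ('X^(L.+1))%:P; ring.
rewrite -[X in cong2 _ _ X]subr0; apply: cong2_add; first exact: cong2_refl.
apply: cong2_opp; rewrite -(mulr0 (y - 1)); apply: cong2_mul; first exact: cong2_refl.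
rewrite -polyC0; apply: cong2_C; exact: Gc.
Qed.

Lemma cB_T (L : nat) : (L <= n)%N -> cong2 n (\prod_(i < n) cB L i) (T n L).
Proof.
case: L => [_|L hL].
  rewrite big1 => [|i _]; last by rewrite /cB.
  by rewrite /T /Q /p !big_ord0 expr0 !mulr1 polyC1; exact: cong2_refl.
rewrite -(big_mkord xpredT (cB L.+1)) (@big_cat_nat _ _ _ L) //=; last exact: ltnW.
rewrite [\prod_(L <= i < n) _]big_ltn // [X in _ * (_ * X)]big_nat_cond [X in _ * (_ * X)]big1 ?mulr1; last first.
  move=> i /andP [/andP [hi _] _]; rewrite /cB ltnNge ltnW //= gtn_eqF //.
rewrite big_nat_cond.
apply: (@cong2_trans _ _ ((\prod_(0 <= i < L | (0 <= i < L)%N && true) ((G n i.+1)%:P * (y - ('X^(i.+1))%:P)))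
     * (('X^(L.+1) * G n L.+1)%:P * (y - 1)))).
  apply: cong2_mul; last exact: cB_eq.
  apply: cong2_prod => i /andP [/andP [_ hi] _]; exact: cB_lt.
rewrite -big_nat_cond big_mkord big_split /= -rmorph_prod.
rewrite /T /Q /p big_ord_recr big_ord_recl /= expr0.
apply: cong2_eq.
rewrite !rmorphM /=.
set A := (\prod_(i < L) G n i.+1)%:P.
set B := \prod_(i < L) (y - ('X^(i.+1))%:P).
set g := (G n L.+1)%:P; set x := ('X^(L.+1))%:P.
rewrite polyC1; ring.
Qed.

Lemma O_cong : cong2 n O (S n).
Proof.
rewrite O_eq /S; apply: cong2_sum => L _; apply: cB_T; rewrite -ltnS; exact: ltn_ord.
Qed.

End Comb2.

Section Final.
Variable n : nat.

Definition cL a : int := \sum_(m : mult n | is_partition m && is_distinct m && (spart m == a))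
  (-1) ^+ (nparts m).-1.
Definition cR a : int := \sum_(m : mult n | is_partition m) \sum_(j < (nu_d m).+1)
  (-1) ^+ j * ('C(nu_d m, j))%:R * ((lpart m - j)%N == a)%:R.

Lemma cL_coef a : (0 < a)%N -> (a <= n)%N -> cL a = (l n a)`_n.
Proof.
move=> a0 an; rewrite -lhs_gf // coef_sum /cL big_mkcond [RHS]big_mkcond.
apply: eq_bigr => m _.
have e : ((-1) ^+ (nparts m).-1 : {poly int}) = ((-1) ^+ (nparts m).-1)%:P.
  by rewrite rmorphXn rmorphN rmorph1.
rewrite e coefCM coefXn /is_partition -andbA.
case: (is_distinct m && (spart m == a)); rewrite ?andbT ?andbF //.
by rewrite eq_sym; case: eqP; rewrite ?mulr1 ?mulr0.
Qed.

Lemma cR_coef a : cR a = ((O n)`_a)`_n.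
Proof.
rewrite /O !coef_sum /cR big_mkcond; apply: eq_bigr => m _.
rewrite coefCM.
have -> : (wt m)`_a = (\sum_(j < (nu_d m).+1)
    (-1) ^+ j * ('C(nu_d m, j))%:R * ((lpart m - j)%N == a)%:R)%:P.
  rewrite /wt coef_sum rmorph_sum; apply: eq_bigr => j _.
  by rewrite coefCM coefXn !rmorphM /= !rmorph_nat [(_ == a)]eq_sym.
rewrite mulrC coefCM coefXn /is_partition eq_sym.
by case: eqP; rewrite ?mulr1 ?mulr0.
Qed.

Lemma count_eq a : (0 < a)%N -> (a <= n)%N -> cL a = cR a.
Proof.
move=> a0 an; rewrite cL_coef // cR_coef.
rewrite (O_cong (n := n) a (leqnn n)) (o_eq_l an (leqnn n)).
by [].
Qed.

Lemma sum_ind_gen (R' : nzRingType) K x (f : nat -> R') :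
  (x < K)%N -> \sum_(a < K) (x == a)%:R * f a = f x.
Proof.
move=> hx; rewrite (bigD1 (Ordinal hx)) //= eqxx mul1r big1 ?addr0 //.
move=> j hj; case: eqP => h; last by rewrite mul0r.
by exfalso; move/eqP: hj; apply; apply: val_inj; rewrite /= h.
Qed.

Lemma final (R' : comNzRingType) (g : nat -> R') : g 0%N = 0 -> (0 < n)%N ->
  \sum_(m : mult n | is_partition m && is_distinct m) (-1) ^+ (nparts m).-1 * g (spart m)
  = \sum_(m : mult n | is_partition m) \sum_(j < (nu_d m).+1)
       (-1) ^+ j * ('C(nu_d m, j))%:R * g (lpart m - j)%N.
Proof.
move=> g0 hn.
transitivity (\sum_(a < n.+1) (cL a)%:~R * g a).
  transitivity (\sum_(m : mult n | is_partition m && is_distinct m)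
      \sum_(a < n.+1) (spart m == a)%:R * ((-1) ^+ (nparts m).-1 * g a)).
    apply: eq_bigr => m /andP [hp _]; rewrite (sum_ind_gen (fun a => (-1) ^+ (nparts m).-1 * g a)) //.
    by rewrite ltnS; exact: spart_le.
  rewrite exchange_big /=; apply: eq_bigr => a _.
  rewrite /cL rmorph_sum big_distrl /= [RHS]big_mkcondr /=; apply: eq_bigr => m _.
  case: (spart m == a); last by rewrite mul0r.
  by rewrite mul1r rmorphXn rmorphN rmorph1.
transitivity (\sum_(a < n.+1) (cR a)%:~R * g a); last first.
  symmetry.
  transitivity (\sum_(m : mult n | is_partition m) \sum_(j < (nu_d m).+1)
      \sum_(a < n.+1) ((lpart m - j)%N == a)%:R * ((-1) ^+ j * ('C(nu_d m, j))%:R * g a)).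
    apply: eq_bigr => m _; apply: eq_bigr => j _; rewrite (sum_ind_gen (fun a => (-1) ^+ j * ('C(nu_d m, j))%:R * g a)) //.
    by rewrite ltnS; apply: leq_trans (leq_subr _ _) (lpart_le m).
  rewrite (eq_bigr (fun m : mult n => \sum_(a < n.+1) \sum_(j < (nu_d m).+1)
      ((lpart m - j)%N == a)%:R * ((-1) ^+ j * ('C(nu_d m, j))%:R * g a))) => [|m _]; last first.
    by rewrite exchange_big.
  rewrite exchange_big /=; apply: eq_bigr => a _.
  rewrite /cR rmorph_sum big_distrl /=; apply: eq_bigr => m _.
  rewrite rmorph_sum big_distrl /=; apply: eq_bigr => j _.
  rewrite !rmorphM rmorphXn rmorphN rmorph1 !rmorph_nat /=.
  set b := (_ == _)%:R; set c := (-1) ^+ _ * _; by rewrite mulrA [b * c]mulrC.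
apply: eq_bigr => -[a ha] _ /=.
case: a ha => [|a] ha; first by rewrite g0 !mulr0.
by rewrite count_eq.
Qed.

End Final.

End QA.

Theorem corollary2p4 (R : realType) (k : R[i]) (n : nat) (hn : (0 < n)%N) :
  \sum_(m : mult n | is_partition m && is_distinct m)
      (-1) ^+ (nparts m).-1 * cpow_nat (spart m) k
  = \sum_(m : mult n | is_partition m)
      \sum_(j < (nu_d m).+1)
         (-1) ^+ j * ('C(nu_d m, j))%:R * cpow_nat (lpart m - j) k.
Proof.
apply: (QA.final (g := fun t => cpow_nat t k)) => //.
Qed.
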